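(* Let $n\ge1$, $K$ the uniform Kasteleyn matrix of the Aztec diamond of size $n$, and for $k,l\in\{0,1\}$ $$H^{k,l}_n(\mathtt{w},\mathtt{b})=\sum_{\substack{1\le x_1\le 2n-1,\ x_1\text{ odd}\\1\le y_2\le 2n-1,\ y_2\text{ odd}}}K^{-1}((x_1,2nk),(2nl,y_2))\,w_1^{x_1}w_2^{2nk}b_1^{2nl}b_2^{y_2}.$$ Then $H^{k,l}_n(\mathtt{w},\mathtt{b})=F^{k,l}_n(\mathtt{w},\mathtt{b})$ for all $k,l\in\{0,1\}$, where $F^{0,0}_n=F_n(w_1^2,b_2^2)w_1b_2$, $F^{0,1}_n=F_n(-1/w_1^2,-b_2^2)w_1^{2n-1}b_1^{2n}b_2\mathrm{i}$, $F^{1,0}_n=F_n(-w_1^2,-1/b_2^2)w_1w_2^{2n}b_2^{2n-1}\mathrm{i}$, $F^{1,1}_n=F_n(1/w_1^2,1/b_2^2)w_1^{2n-1}w_2^{2n}b_1^{2n}b_2^{2n-1}$, with $F_n(w,b)=-\frac{\mathrm{i}}{2}f_n\!\left(\frac{(1+b\mathrm{i})(1+w\mathrm{i})}{2}\right)$.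
   Context: $\mathrm{i}=\sqrt{-1}$. $\mathtt{W}=\{(x_1,x_2): x_1\text{ odd},\ x_2\text{ even},\ 1\le x_1\le 2n-1,\ 0\le x_2\le 2n\}$, $\mathtt{B}=\{(x_1,x_2): x_1\text{ even},\ x_2\text{ odd},\ 0\le x_1\le 2n,\ 1\le x_2\le 2n-1\}$, $e_1=(1,1)$, $e_2=(-1,1)$. The uniform Kasteleyn matrix has rows indexed by $\mathtt{B}$, columns by $\mathtt{W}$, with $K(x,y)=1$ if $x-y=\pm e_1$, $K(x,y)=\mathrm{i}$ if $x-y=\pm e_2$, $0$ otherwise; $K^{-1}$ is indexed by $\mathtt{W}\times\mathtt{B}$. $f_n(t)=(1-t^n)/(1-t)$. *)

(* Defs.v *)
From HB Require Import structures.
From mathcomp Require Import all_boot all_order all_algebra.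
Set Implicit Arguments. Unset Strict Implicit. Unset Printing Implicit Defensive.
Import Order.TTheory GRing.Theory Num.Theory.
Local Open Scope ring_scope.

(* The Aztec diamond of size n has #W = #B = n * (n+1).  We index both
   colour classes by 'I_(n * n.+1):
   white j <-> (x1, x2) = (2 (j / (n+1)) + 1, 2 (j mod (n+1)))
   black i <-> (x1, x2) = (2 (i mod (n+1)), 2 (i / (n+1)) + 1)
   These are bijections onto W and B respectively. *)
Definition wx1 {n : nat} (j : 'I_(n * n.+1)) : nat := ((j %/ n.+1).*2).+1.
Definition wx2 {n : nat} (j : 'I_(n * n.+1)) : nat := (j %% n.+1).*2.
Definition bx1 {n : nat} (i : 'I_(n * n.+1)) : nat := (i %% n.+1).*2.
Definition bx2 {n : nat} (i : 'I_(n * n.+1)) : nat := ((i %/ n.+1).*2).+1.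

(* uniform Kasteleyn matrix: rows indexed by B, columns by W;
   K(x,y) = 1 if x - y = +-e1, 'i if x - y = +-e2, 0 otherwise,
   with e1 = (1,1), e2 = (-1,1). *)
Definition kast_entry (C : numClosedFieldType) (n : nat)
    (i j : 'I_(n * n.+1)) : C :=
  let d1 : int := (bx1 i)%:Z - (wx1 j)%:Z in
  let d2 : int := (bx2 i)%:Z - (wx2 j)%:Z in
  if ((d1 == 1) && (d2 == 1)) || ((d1 == -1) && (d2 == -1)) then 1
  else if ((d1 == -1) && (d2 == 1)) || ((d1 == 1) && (d2 == -1)) then 'i
  else 0.

Definition Kast (C : numClosedFieldType) (n : nat) : 'M[C]_(n * n.+1) :=
  \matrix_(i, j) @kast_entry C n i j.

(* K^{-1}: rows indexed by W, columns by B. *)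
Definition Kinv (C : numClosedFieldType) (n : nat) : 'M[C]_(n * n.+1) :=
  invmx (Kast C n).

Definition Hgen (C : numClosedFieldType) (n k l : nat)
    (w1 w2 b1 b2 : C) : C :=
  \sum_(j : 'I_(n * n.+1) | wx2 j == (2 * n * k)%N)
    \sum_(i : 'I_(n * n.+1) | bx1 i == (2 * n * l)%N)
      Kinv C n j i * w1 ^+ wx1 j * w2 ^+ (2 * n * k) * b1 ^+ (2 * n * l)
        * b2 ^+ bx2 i.

(* f_n(t) = (1 - t^n)/(1 - t) = 1 + t + ... + t^(n-1) (polynomial form) *)
Definition fn (C : numClosedFieldType) (n : nat) (t : C) : C :=
  \sum_(m < n) t ^+ m.

Definition Fn (C : numClosedFieldType) (n : nat) (w b : C) : C :=
  - ('i / 2) * fn n ((1 + b * 'i) * (1 + w * 'i) / 2).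

Definition Fgen (C : numClosedFieldType) (n k l : nat)
    (w1 w2 b1 b2 : C) : C :=
  match k, l with
  | 0, 0 => Fn n (w1 ^+ 2) (b2 ^+ 2) * w1 * b2
  | 0, _ => Fn n (- (w1 ^+ 2)^-1) (- b2 ^+ 2)
              * w1 ^+ (2 * n - 1) * b1 ^+ (2 * n) * b2 * 'i
  | _, 0 => Fn n (- w1 ^+ 2) (- (b2 ^+ 2)^-1)
              * w1 * w2 ^+ (2 * n) * b2 ^+ (2 * n - 1) * 'i
  | _, _ => Fn n ((w1 ^+ 2)^-1) ((b2 ^+ 2)^-1)
              * w1 ^+ (2 * n - 1) * w2 ^+ (2 * n) * b1 ^+ (2 * n)
              * b2 ^+ (2 * n - 1)
  end.

(* Main.v *)
Require Import Defs.
From HB Require Import structures.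
From mathcomp Require Import all_boot all_order all_algebra.
From mathcomp Require Import ring zify lra.
Import Order.TTheory GRing.Theory Num.Theory.
Local Open Scope ring_scope.
Lemma sum_divmod (R : nmodType) (M N : nat) (G : nat -> R) :
  \sum_(j < M * N) G j = \sum_(a < M) \sum_(r < N) G (a * N + r)%N.
Proof.
elim: M => [|M IH]; first by rewrite mul0n !big_ord0.
rewrite big_ord_recr /= -IH -!(big_mkord xpredT).
rewrite (big_cat_nat _ (n := M * N)) //=; last by rewrite mulSn leq_addl.
congr (_ + _).
rewrite -{1}[(M * N)%N]add0n big_addn mulSn addnK big_mkord.
by apply: eq_bigr => r _; rewrite addnC.
Qed.

Lemma sum_ind (R : pzSemiRingType) (N K : nat) (f : nat -> R) :
  \sum_(r < N) ((r : nat) == K)%:R * f r = if (K < N)%N then f K else 0.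
Proof.
elim: N => [|N IH]; first by rewrite big_ord0.
rewrite big_ord_recr /= IH.
case: (ltngtP K N) => hK.
- by rewrite (ltn_trans hK (ltnSn _)) mul0r addr0.
- by rewrite ltnS leqNgt hK mul0r addr0.
- by rewrite hK ltnSn mul1r add0r.
Qed.

Definition Yf (C : numClosedFieldType) n (Y : 'cV[C]_(n*n.+1)) (a r : nat) : C :=
  if (r < n.+1)%N then
    (if (insub (a * n.+1 + r)%N : option 'I_(n*n.+1)) is Some j then Y j 0 else 0)
  else 0.
Arguments Yf {C n} Y a r.

Definition ypoly (C : numClosedFieldType) n (Y : 'cV[C]_(n*n.+1)) (r : nat) : {poly C} :=
  \poly_(a < n) Yf Y a r.
Arguments ypoly {C n} Y r.

Lemma Yf_ge (C : numClosedFieldType) n (Y : 'cV[C]_(n*n.+1)) a r :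
  (n <= a)%N -> Yf Y a r = 0.
Proof.
move=> ha; rewrite /Yf; case: ifP => // _; rewrite insubF //.
apply/negbTE; rewrite -leqNgt; apply: leq_trans (leq_addr _ _); exact: leq_mul.
Qed.

Lemma coef_ypoly (C : numClosedFieldType) n (Y : 'cV[C]_(n*n.+1)) r k :
  (ypoly Y r)`_k = Yf Y k r.
Proof. by rewrite coef_poly; case: ltnP => // h; rewrite Yf_ge. Qed.

Lemma Yf_ord (C : numClosedFieldType) n (Y : 'cV[C]_(n*n.+1)) (j : 'I_(n*n.+1)) :
  Yf Y (j %/ n.+1) (j %% n.+1) = Y j 0.
Proof.
by rewrite /Yf ltn_pmod // -divn_eq valK.
Qed.

Lemma divmodK n a r : (r < n.+1)%N -> ((a * n.+1 + r) %/ n.+1 = a)%N /\ ((a * n.+1 + r) %% n.+1 = r)%N.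
Proof.
move=> hr; split; first by rewrite divnMDl // divn_small // addn0.
by rewrite modnMDl modn_small.
Qed.
Lemma kast_val (C : numClosedFieldType) (m c a r : nat) :
  (let d1 : int := (m.*2)%:Z - (a.*2.+1)%:Z in
   let d2 : int := (c.*2.+1)%:Z - (r.*2)%:Z in
   if ((d1 == 1) && (d2 == 1)) || ((d1 == -1) && (d2 == -1)) then 1
   else if ((d1 == -1) && (d2 == 1)) || ((d1 == 1) && (d2 == -1)) then 'i
   else 0 : C)
  = ((a.+1 == m) && (r == c))%:R + ((a == m) && (r == c.+1))%:R
    + 'i * ((a == m) && (r == c))%:R + 'i * ((a.+1 == m) && (r == c.+1))%:R.
Proof.
have E1 : ((m.*2)%:Z - (a.*2.+1)%:Z == 1) = (a.+1 == m) by apply/eqP/eqP; lia.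
have E2 : ((m.*2)%:Z - (a.*2.+1)%:Z == -1) = (a == m) by apply/eqP/eqP; lia.
have E3 : ((c.*2.+1)%:Z - (r.*2)%:Z == 1) = (r == c) by apply/eqP/eqP; lia.
have E4 : ((c.*2.+1)%:Z - (r.*2)%:Z == -1) = (r == c.+1) by apply/eqP/eqP; lia.
rewrite /= E1 E2 E3 E4.
have nA : ~~ ((a.+1 == m) && (a == m)) by apply/negP => /andP [/eqP h1 /eqP h2]; lia.
have nB : ~~ ((r == c) && (r == c.+1)) by apply/negP => /andP [/eqP h1 /eqP h2]; lia.
move: nA nB; case: (a.+1 == m); case: (a == m); case: (r == c); case: (r == c.+1) => //= _ _;
  by rewrite ?mulr0 ?mulr1 ?addr0 ?add0r.
Qed.
Lemma sum2 (C : numClosedFieldType) (f : nat -> nat -> C) A R N M : (R < N)%N ->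
  \sum_(a < M) \sum_(r < N) (((a : nat) == A) && ((r : nat) == R))%:R * f a r
  = if (A < M)%N then f A R else 0.
Proof.
move=> hR.
under eq_bigr => a _ do under eq_bigr => r _ do rewrite -mulnb natrM -mulrA.
under eq_bigr => a _ do rewrite -mulr_sumr (@sum_ind _ _ _ (f a)) hR.
by rewrite (@sum_ind _ _ _ (fun a => f a R)).
Qed.

Lemma sum2S (C : numClosedFieldType) (f : nat -> nat -> C) m R N M : (R < N)%N ->
  \sum_(a < M) \sum_(r < N) (((a : nat).+1 == m) && ((r : nat) == R))%:R * f a r
  = if m is m'.+1 then (if (m' < M)%N then f m' R else 0) else 0.
Proof.
move=> hR; case: m => [|m].
  by rewrite big1 // => a _; rewrite big1 // => r _; rewrite mul0r.
by rewrite -(@sum2 _ f m _ _ _ hR).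
Qed.

Lemma KY_coef (C : numClosedFieldType) n (Y : 'cV[C]_(n*n.+1)) (c m : nat) (i : 'I_(n*n.+1)) :
  (c < n)%N -> (m < n.+1)%N -> nat_of_ord i = (c * n.+1 + m)%N ->
  (Kast C n *m Y) i 0 = (('X + 'i%:P) * ypoly Y c + (1 + 'i%:P * 'X) * ypoly Y c.+1)`_m.
Proof.
move=> hc hm hi.
have [ec em] : (i %/ n.+1 = c)%N /\ (i %% n.+1 = m)%N by rewrite hi; exact: divmodK.
pose kf (a r : nat) : C := ((a.+1 == m) && (r == c))%:R + ((a == m) && (r == c.+1))%:R
    + 'i * ((a == m) && (r == c))%:R + 'i * ((a.+1 == m) && (r == c.+1))%:R.
pose G (x : nat) := kf (x %/ n.+1)%N (x %% n.+1)%N * Yf Y (x %/ n.+1)%N (x %% n.+1)%N.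
rewrite !mxE.
transitivity (\sum_(j < n * n.+1) G j).
  apply: eq_bigr => j _; rewrite mxE -Yf_ord /G; congr (_ * _).
  by rewrite /kast_entry /bx1 /bx2 /wx1 /wx2 em ec; exact: kast_val.
rewrite sum_divmod.
under eq_bigr => a _ do under eq_bigr => r _ do
  rewrite /G (proj1 (@divmodK _ a _ (ltn_ord r))) (proj2 (@divmodK _ a _ (ltn_ord r))) /kf !mulrDl -!mulrA.
under eq_bigr => a _ do rewrite !big_split /= -!mulr_sumr.
rewrite !big_split /= -!mulr_sumr.
have hc1 : (c < n.+1)%N by apply: ltnW.
have hc2 : (c.+1 < n.+1)%N by [].
rewrite (@sum2S _ (Yf Y) m c _ _ hc1) (@sum2S _ (Yf Y) m c.+1 _ _ hc2).
rewrite (@sum2 _ (Yf Y) m c _ _ hc1) (@sum2 _ (Yf Y) m c.+1 _ _ hc2).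
have -> : ('X + 'i%:P) * ypoly Y c + (1 + 'i%:P * 'X) * ypoly Y c.+1
   = 'X * ypoly Y c + 'i%:P * ypoly Y c + ypoly Y c.+1 + 'i%:P * ('X * ypoly Y c.+1) by ring.
rewrite !coefD !coefCM !coefXM !coef_ypoly.
have F r : (if (m < n)%N then Yf Y m r else 0) = Yf Y m r.
  by case: ltnP => // h; rewrite Yf_ge.
rewrite !F.
clear kf G em hi F; case: m hm => [|m] hm /=.
  ring.
have F' r : (if (m < n)%N then Yf Y m r else 0) = Yf Y m r.
  by case: ltnP => // h; rewrite Yf_ge.
rewrite !F'; ring.
Qed.
Lemma Kpoly (C : numClosedFieldType) n (Y : 'cV[C]_(n*n.+1)) (V : nat -> nat -> C) :
  (forall c m (i : 'I_(n*n.+1)), (c < n)%N -> (m < n.+1)%N -> nat_of_ord i = (c*n.+1+m)%N ->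
     (Kast C n *m Y) i 0 = V c m) ->
  forall c, (c < n)%N ->
  ('X + 'i%:P) * ypoly Y c + (1 + 'i%:P * 'X) * ypoly Y c.+1 = \poly_(m < n.+1) V c m.
Proof.
move=> h c hc; apply/polyP => m; rewrite coef_poly; case: ltnP => hm.
  have hi : (c * n.+1 + m < n * n.+1)%N by nia.
  by rewrite -(h c m (Ordinal hi)) //; symmetry; apply: KY_coef.
have -> : ('X + 'i%:P) * ypoly Y c + (1 + 'i%:P * 'X) * ypoly Y c.+1
   = 'X * ypoly Y c + 'i%:P * ypoly Y c + ypoly Y c.+1 + 'i%:P * ('X * ypoly Y c.+1) by ring.
rewrite !coefD !coefCM !coefXM !coef_ypoly !Yf_ge //; try lia.
by case: (m == 0%N); rewrite ?mulr0 ?addr0 ?Yf_ge //; lia.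
Qed.

Lemma telesc (R : comPzRingType) (p q : R) (y W : nat -> R) n :
  (forall c, (c < n)%N -> p * y c + q * y c.+1 = W c) ->
  p^+n * y 0%N - (-q)^+n * y n = \sum_(c<n) p^+(n.-1-c) * (-q)^+c * W c.
Proof.
move=> h.
suff: forall N, (N <= n)%N -> p^+N * y 0%N - (-q)^+N * y N = \sum_(c<N) p^+(N.-1-c) * (-q)^+c * W c.
  by apply.
elim=> [|N IH] hN; first by rewrite big_ord0 !expr0 !mul1r subrr.
rewrite big_ord_recr /= subnn expr0 mul1r -(h N hN).
have -> : \sum_(i < N) p ^+ (N - i) * (- q) ^+ i * W i = p * \sum_(i < N) p ^+ (N.-1 - i) * (- q) ^+ i * W i.
  rewrite mulr_sumr; apply: eq_bigr => i _.
  have -> : (N - i = (N.-1 - i).+1)%N by have := ltn_ord i; lia.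
  by rewrite exprS !mulrA.
rewrite -IH ?(ltnW hN) // !exprS; ring.
Qed.
Lemma iP2 (C : numClosedFieldType) : ('i%:P : {poly C})^+2 = -1.
Proof. by rewrite -rmorphXn /= sqrCi polyCN. Qed.

Lemma two_neq0 (C : numClosedFieldType) : (2 : C) != 0.
Proof. by rewrite pnatr_eq0. Qed.

Lemma q_neq0 (C : numClosedFieldType) : (1 + 'i%:P * 'X : {poly C}) != 0.
Proof.
apply/eqP => h; have := congr1 (horner^~ 0) h; rewrite !hornerE /= => /eqP.
by rewrite oner_eq0.
Qed.

Lemma uniq0 (C : numClosedFieldType) n (D E : {poly C}) : (size D <= n)%N ->
  ('X + 'i%:P)^+n * D = (-(1 + 'i%:P * 'X))^+n * E -> D = 0 /\ E = 0.
Proof.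
move=> sD h.
have hq : -(1 + 'i%:P * 'X) = ('X - 'i%:P) * (-'i)%:P :> {poly C}.
  have := iP2 C; rewrite polyCN => hi; ring: hi.
have hp : 'X + 'i%:P = 'X - (-'i)%:P :> {poly C} by rewrite polyCN opprK.
have cop : coprimep (('X - 'i%:P)^+n) (('X + 'i%:P)^+n : {poly C}).
  rewrite hp; apply/coprimep_expl/coprimep_expr/coprimep_XsubC2.
  by rewrite -opprD oppr_eq0 -mulr2n mulrn_eq0 /= neq0Ci.
have dv : ('X - 'i%:P)^+n %| D.
  rewrite -(Gauss_dvdpr _ cop) h hq exprMn -mulrA; apply: dvdp_mulr; exact: dvdpp.
have D0 : D = 0.
  apply/eqP; apply: contraT => nz.
  by have := dvdp_leq nz dv; rewrite size_exp_XsubC ltnNge sD.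
split=> //; move: h; rewrite D0 mulr0 => /esym/eqP; rewrite mulf_eq0 expf_eq0 oppr_eq0.
by rewrite (negbTE (q_neq0 C)) andbF /= => /eqP.
Qed.
Lemma poly_zero (C : numClosedFieldType) N : \poly_(m < N) (0 : C) = 0.
Proof. by apply/polyP => m; rewrite coef_poly coef0; case: ifP. Qed.

Lemma Kast_inj (C : numClosedFieldType) n (Y : 'cV[C]_(n*n.+1)) : Kast C n *m Y = 0 -> Y = 0.
Proof.
move=> hY.
have hP : forall c, (c < n)%N ->
    ('X + 'i%:P) * ypoly Y c + (1 + 'i%:P * 'X) * ypoly Y c.+1 = 0.
  move=> c hc; rewrite (@Kpoly C n Y (fun _ _ => 0)) ?poly_zero // => c' m i _ _ _.
  by rewrite hY mxE.
have hT := @telesc _ ('X + 'i%:P) (1 + 'i%:P * 'X) (ypoly Y) (fun _ => 0) n hP.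
rewrite big1 in hT; last by move=> c _; rewrite mulr0.
move/eqP: hT; rewrite subr_eq0 => /eqP hT.
have [y0 _] := @uniq0 C n _ _ (size_poly _ _) hT.
have yall : forall c, (c <= n)%N -> ypoly Y c = 0.
  elim=> [|c IH] hc //.
  have := hP c hc; rewrite IH ?(ltnW hc) // mulr0 add0r => /eqP.
  by rewrite mulf_eq0 (negbTE (q_neq0 C)) /= => /eqP.
apply/matrixP => j k; rewrite (ord1 k) [RHS]mxE -Yf_ord -coef_ypoly yall ?coef0 //.
by rewrite -ltnS ltn_pmod.
Qed.

Lemma Kast_unit (C : numClosedFieldType) n : Kast C n \in unitmx.
Proof.
rewrite -unitmx_tr -row_free_unit; apply: inj_row_free => v hv.
have e : Kast C n *m v^T = 0 by rewrite -[Kast C n]trmxK -trmx_mul hv trmx0.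
by have := @Kast_inj C n _ e => /(congr1 trmx); rewrite trmxK trmx0.
Qed.
Definition vcol (C : numClosedFieldType) n l (b1 b2 : C) : 'cV[C]_(n*n.+1) :=
  \col_(i < n*n.+1) (if bx1 i == (2*n* l)%N then b1^+(2*n* l) * b2^+(bx2 i) else 0).
Arguments vcol {C} n l b1 b2.

Lemma Hgen_eval (C : numClosedFieldType) n k l (w1 w2 b1 b2 : C) : (k <= 1)%N ->
  Hgen n k l w1 w2 b1 b2
  = w1 * w2^+(2*n* k) * (ypoly (Kinv C n *m vcol n l b1 b2) (n* k)).[w1^+2].
Proof.
move=> hk; rewrite /Hgen.
set Y := Kinv C n *m vcol n l b1 b2.
transitivity (\sum_(j < n * n.+1 | wx2 j == (2 * n * k)%N) w1^+(wx1 j) * w2^+(2*n* k) * Y j 0).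
  apply: eq_bigr => j _; rewrite /Y mxE big_mkcond mulr_sumr; apply: eq_bigr => i _.
  rewrite mxE; case: ifP => _; last by rewrite !mulr0.
  ring.
rewrite big_mkcond /=.
pose G (x : nat) := if ((x %% n.+1).*2 == 2 * n * k)%N then
   w1^+((x %/ n.+1).*2.+1) * w2^+(2*n* k) * Yf Y (x %/ n.+1) (x %% n.+1) else 0.
transitivity (\sum_(j < n * n.+1) G j).
  by apply: eq_bigr => j _; rewrite /G Yf_ord.
rewrite sum_divmod.
have hnk : (n * k < n.+1)%N by nia.
transitivity (\sum_(a<n) w1^+(a.*2.+1) * w2^+(2*n* k) * Yf Y a (n*k)%N).
  apply: eq_bigr => a _.
  transitivity (\sum_(r < n.+1) ((r:nat) == n*k)%:R * (w1^+(a.*2.+1) * w2^+(2*n* k) * Yf Y a r)).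
    apply: eq_bigr => r _; have [e1 e2] := @divmodK n a r (ltn_ord r); rewrite /G e1 e2.
    have -> : (((r:nat).*2 == 2*n* k)%N) = ((r:nat) == n* k)%N by apply/eqP/eqP; lia.
    by case: ifP; rewrite ?mul1r ?mul0r.
  by rewrite (@sum_ind _ _ _ (fun r => w1^+(a.*2.+1) * w2^+(2*n* k) * Yf Y a r)) hnk.
rewrite /ypoly horner_poly mulr_sumr; apply: eq_bigr => a _.
rewrite -mul2n exprS mulnC exprM exprAC; ring.
Qed.
Lemma Ysys (C : numClosedFieldType) n l (b1 b2 : C) : (l <= 1)%N ->
  ('X + 'i%:P)^+n * ypoly (Kinv C n *m vcol n l b1 b2) 0%N
  - (-(1 + 'i%:P * 'X))^+n * ypoly (Kinv C n *m vcol n l b1 b2) n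
  = \sum_(c<n) ('X + 'i%:P)^+(n.-1-c) * (-(1 + 'i%:P * 'X))^+c
       * ((b1^+(2*n* l) * b2^+(2*c+1))%:P * 'X^(n* l)).
Proof.
move=> hl; set Y := Kinv C n *m vcol n l b1 b2.
have KY : Kast C n *m Y = vcol n l b1 b2 by rewrite /Y /Kinv mulKVmx // Kast_unit.
apply: (@telesc _ _ _ (ypoly Y) (fun c => (b1^+(2*n* l) * b2^+(2*c+1))%:P * 'X^(n* l))) => c hc.
rewrite (@Kpoly C n Y (fun c m => if (m == n * l)%N then b1^+(2*n* l) * b2^+(2*c+1) else 0)) //.
  apply/polyP => m; rewrite coef_poly coefCM coefXn.
  case: (eqVneq m (n * l)%N) => [->|hm] /=.
    by rewrite mulr1 (_ : (n * l < n.+1)%N = true) //; apply/idP; nia.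
  by rewrite mulr0; case: ifP.
move=> c' m i hc' hm hi.
have [ec em] : (i %/ n.+1 = c')%N /\ (i %% n.+1 = m)%N by rewrite hi; exact: divmodK.
rewrite KY mxE /bx1 /bx2 ec em.
have -> : ((m.*2 == 2 * n * l)%N) = (m == n * l)%N by apply/eqP/eqP; lia.
by rewrite -mul2n addn1.
Qed.
Lemma size_sum_le (C : numClosedFieldType) N n (F : nat -> {poly C}) :
  (forall i, (i < N)%N -> (size (F i) <= n)%N) -> (size (\sum_(i < N) F i)%R <= n)%N.
Proof.
elim: N => [|N IH] h; first by rewrite big_ord0 size_poly0.
rewrite big_ord_recr /=; apply: leq_trans (size_polyD _ _) _; rewrite geq_max h // andbT.
by apply: IH => i hi; apply: h; apply: ltnW.
Qed.

Lemma size_lin (C : numClosedFieldType) (a c : C) : (size (a%:P + c%:P * 'X)%R <= 2)%N.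
Proof.
apply: leq_trans (size_polyD _ _) _; rewrite geq_max (leq_trans (size_polyC_leq1 _)) //=.
by rewrite mul_polyC (leq_trans (size_scale_leq _ _)) // size_polyX.
Qed.

Lemma size_geo1 (C : numClosedFieldType) (x : {poly C}) n : (size x <= 2)%N ->
  (size (\sum_(m<n) x^+m)%R <= n)%N.
Proof.
move=> hx; apply: size_sum_le => m hm; apply: leq_trans (size_poly_exp_leq _ _) _.
have : ((size x).-1 <= 1)%N by case: (size x) hx => [|[|[|]]].
by move=> h1; apply: leq_trans hm; rewrite ltnS; apply: leq_trans (leq_mul h1 (leqnn m)) _; rewrite mul1n.
Qed.

Lemma size_geo2 (C : numClosedFieldType) (x y : {poly C}) n : (size x <= 2)%N -> (size y <= 2)%N ->
  (size (\sum_(m<n) x^+(n.-1-m) * y^+m)%R <= n)%N.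
Proof.
move=> hx hy; apply: (@size_sum_le C n n (fun m => x^+(n.-1-m) * y^+m)) => m hm.
apply: leq_trans (size_polyMleq _ _) _.
have hx1 : ((size x).-1 <= 1)%N by case: (size x) hx => [|[|[|]]].
have hy1 : ((size y).-1 <= 1)%N by case: (size y) hy => [|[|[|]]].
have e1 := size_poly_exp_leq x (n.-1 - m); have e2 := size_poly_exp_leq y m.
have f1 : ((size x).-1 * (n.-1 - m) <= n.-1 - m)%N by apply: leq_trans (leq_mul hx1 (leqnn _)) _; rewrite mul1n.
have f2 : ((size y).-1 * m <= m)%N by apply: leq_trans (leq_mul hy1 (leqnn _)) _; rewrite mul1n.
lia.
Qed.

Lemma size_Cm (C : numClosedFieldType) (c : C) (p : {poly C}) : (size (c%:P * p)%R <= size p)%N.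
Proof. by rewrite mul_polyC size_scale_leq. Qed.

Lemma pbq_neq0 (C : numClosedFieldType) (b : C) :
  ('X + 'i%:P) + b%:P * (1 + 'i%:P * 'X) != 0 :> {poly C}.
Proof.
apply/eqP => h; have := congr1 (horner^~ 'i) h; rewrite !hornerE -expr2 sqrCi subrr mulr0 addr0.
by move/eqP; rewrite -mulr2n mulrn_eq0 /= (negbTE (neq0Ci C)).
Qed.

Lemma h2P (C : numClosedFieldType) : 2 * (2^-1 : C)%:P = 1.
Proof. by rewrite -polyC_natr -polyCM mulfV ?two_neq0. Qed.

Lemma finish (C : numClosedFieldType) n (y0 yn Y0 Yn : {poly C}) (b : C) :
  (size y0 <= n)%N -> (size Y0 <= n)%N ->
  ('X + 'i%:P + b%:P * (1 + 'i%:P * 'X)) * (('X + 'i%:P)^+n * Y0 - (-(1 + 'i%:P * 'X))^+n * Yn)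
  = ('X + 'i%:P + b%:P * (1 + 'i%:P * 'X)) * (('X + 'i%:P)^+n * y0 - (-(1 + 'i%:P * 'X))^+n * yn) ->
  y0 = Y0 /\ yn = Yn.
Proof.
move=> s0 s1 /(mulfI (@pbq_neq0 C b)) E.
have E' : ('X + 'i%:P)^+n * (y0 - Y0) = (-(1 + 'i%:P * 'X))^+n * (yn - Yn).
  apply/eqP; rewrite -subr_eq0; apply/eqP.
  transitivity ((('X + 'i%:P)^+n * y0 - (-(1 + 'i%:P * 'X))^+n * yn) - (('X + 'i%:P)^+n * Y0 - (-(1 + 'i%:P * 'X))^+n * Yn)); first by ring.
  by rewrite E subrr.
have sD : (size (y0 - Y0)%R <= n)%N.
  by apply: leq_trans (size_polyD _ _) _; rewrite size_polyN geq_max s0 s1.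
have [/subr0_eq -> /subr0_eq ->] := @uniq0 C n _ _ sD E'; done.
Qed.
Lemma eqc1 (R : comPzRingType) (x y a c : R) : c = 0 -> x - y = a * c -> x = y.
Proof. by move=> c0 h; apply/eqP; rewrite -subr_eq0 h c0 mulr0. Qed.

Lemma eqc3 (R : comPzRingType) (x y a1 a2 a3 c1 c2 c3 : R) :
  c1 = 0 -> c2 = 0 -> c3 = 0 -> x - y = a1 * c1 + a2 * c2 + a3 * c3 -> x = y.
Proof.
by move=> h1 h2 h3 h; apply/eqP; rewrite -subr_eq0 h h1 h2 h3 !mulr0 !addr0.
Qed.

Lemma geo (R : comPzRingType) (x : R) n : (1 - x) * \sum_(m<n) x^+m = 1 - x^+n.
Proof.
have := subrXX 1 x n; rewrite expr1n => ->; congr (_ * _).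
by apply eq_bigr => i _; rewrite expr1n mul1r.
Qed.

Lemma geoS (R : comPzRingType) (x y : R) n :
  (x - y) * \sum_(m<n) x^+(n.-1-m) * y^+m = x^+n - y^+n.
Proof. by rewrite subrXX. Qed.

Lemma sumB (R : comPzRingType) (p q b b2 : R) n : b = b2^+2 ->
  \sum_(k<n) p^+(n.-1-k) * (-q)^+k * b2^+(2*k+1)
  = b2 * \sum_(k<n) p^+(n.-1-k) * (- (b*q))^+k.
Proof.
move=> hb; rewrite mulr_sumr; apply eq_bigr => k _.
rewrite -mulrN exprMn hb -exprM exprD expr1; ring.
Qed.

Lemma b2pow (R : comPzRingType) (b b2 : R) n : (0 < n)%N -> b = b2^+2 ->
  b2 ^+ (2 * n - 1) * b = b2 * b^+n.
Proof.
move=> n0 ->; rewrite -exprM -exprD -exprS; congr (_ ^+ _); lia.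
Qed.

Lemma candA (R : comPzRingType) (n:nat) (X j h b bi b2 p q : R) : (0 < n)%N ->
  j^+2 = -1 -> 2 * h = 1 -> b*bi = 1 -> b = b2^+2 -> p = X + j -> q = 1 + j*X ->
  (p + b*q) * (p^+n * (-(j*h)*b2 * \sum_(m<n) ((1 + b*j)*h*q)^+m)
     - (-q)^+n * (h * b2^+(2*n-1) * \sum_(m<n) (-((1 + b*j)*h*bi) * p)^+m))
  = (p + b*q) * \sum_(k<n) p^+(n.-1-k) * (-q)^+k * b2^+(2*k+1).
Proof.
move=> n0 hj hh hbi hb hp hq.
have c1 : j^+2 + 1 = 0 by rewrite hj addNr.
have c2 : 2 * h - 1 = 0 by rewrite hh subrr.
have c3 : b * bi - 1 = 0 by rewrite hbi subrr.
set s := (1 + b*j)*h*q; set t := -((1 + b*j)*h*bi) * p.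
set Y0 := \sum_(m<n) s^+m; set Yn := \sum_(m<n) t^+m.
have e1 : (p + b*q) * (-(j*h)) = 1 - s.
  apply: (@eqc3 _ _ _ (-h) 1 0 _ _ _ c1 c2 c1); rewrite /s hp hq; ring.
have e2 : p + b*q = 2*b*(1 - t).
  apply: (@eqc3 _ _ _ (-b) (-(1+b*j) * p * (b*bi-1+1)) (-(1+b*j) * p) _ _ _ c1 c2 c3).
  rewrite /t hp; rewrite hq; ring.
have e3 : p * s - b * (-q) * t = 0.
  apply: (@eqc1 _ _ _ (-(p * q * (1+b*j) * h)) _ c3); rewrite /s /t; ring.
have F1 : (p + b*q) * (-(j*h)) * Y0 = 1 - s^+n by rewrite e1 geo.
have F2 : (p + b*q) * Yn = 2*b*(1 - t^+n) by rewrite {1}e2 -mulrA geo.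
have F3 : (p + b*q) * \sum_(k<n) p^+(n.-1-k) * (- (b*q))^+k = p^+n - (-(b*q))^+n.
  by rewrite -{1}[b*q]opprK geoS.
have F4 : p^+n * s^+n - b^+n * (-q)^+n * t^+n = 0.
  have e3' : p*s = b*(-q)*t by apply/eqP; rewrite -subr_eq0 e3.
  by rewrite -exprMn e3' !exprMn subrr.
have F5 := @b2pow _ _ _ _ n0 hb.
have F6 : (-(b*q))^+n = b^+n * (-q)^+n by rewrite -exprMn mulrN.
rewrite (@sumB _ _ _ b) //.
have -> : (p + b * q) * (b2 * \sum_(k < n) p ^+ (n.-1 - k) * (- (b * q)) ^+ k) =
   b2 * ((p + b * q) * \sum_(k < n) p ^+ (n.-1 - k) * (- (b * q)) ^+ k) by ring.
rewrite F3 F6.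
have -> : (p + b * q) * (p ^+ n * (- (j * h) * b2 * Y0) - (- q) ^+ n * (h * b2 ^+ (2 * n - 1) * Yn))
  = b2 * p^+n * ((p + b*q) * (-(j*h)) * Y0) - (-q)^+n * b2^+(2*n-1) * h * ((p + b*q) * Yn) by ring.
rewrite F1 F2.
have -> : (-q)^+n * b2^+(2*n-1) * h * (2*b*(1-t^+n)) = (2*h) * (b2^+(2*n-1)*b) * ((-q)^+n - (-q)^+n * t^+n) by ring.
rewrite hh F5.
apply: (@eqc1 _ _ _ (-b2) _ F4); ring.
Qed.
Lemma solve0 (C : numClosedFieldType) n (b1 b2 : C) : (0 < n)%N -> b2 != 0 ->
  ypoly (Kinv C n *m vcol n 0 b1 b2) 0 =
    -('i%:P * (2^-1)%:P) * b2%:P * \sum_(m<n) ((1 + (b2^+2)%:P * 'i%:P) * (2^-1)%:P * (1 + 'i%:P * 'X))^+m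
  /\ ypoly (Kinv C n *m vcol n 0 b1 b2) n =
    (2^-1)%:P * b2%:P^+(2*n-1) * \sum_(m<n) (-((1 + (b2^+2)%:P * 'i%:P) * (2^-1)%:P * ((b2^+2)^-1)%:P) * ('X + 'i%:P))^+m.
Proof.
move=> n0 hb2.
have hbi : (b2^+2)%:P * ((b2^+2)^-1)%:P = 1 :> {poly C} by rewrite -polyCM mulfV // expf_neq0.
have hb : (b2^+2)%:P = (b2%:P)^+2 :> {poly C} by rewrite rmorphXn.
have hA := @candA _ n 'X 'i%:P (2^-1)%:P (b2^+2)%:P ((b2^+2)^-1)%:P b2%:P ('X + 'i%:P) (1 + 'i%:P * 'X)
   n0 (iP2 C) (h2P C) hbi hb erefl erefl.
have hS := @Ysys C n 0 b1 b2 isT.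
apply: (@finish C n _ _ _ _ (b2^+2)).
- exact: size_poly.
- rewrite (_ : -('i%:P * (2^-1)%:P) * b2%:P = (-('i * 2^-1) * b2)%:P :> {poly C}); last by ring.
  apply: leq_trans (@size_Cm C _ _) _; apply: size_geo1.
  rewrite (_ : (1 + (b2^+2)%:P * 'i%:P) * (2^-1)%:P * (1 + 'i%:P * 'X)
     = ((1 + b2^+2 * 'i) * 2^-1)%:P + ((1 + b2^+2 * 'i) * 2^-1 * 'i)%:P * 'X); last by ring.
  exact: size_lin.
rewrite hA hS; congr (_ * _); apply: eq_bigr => c _.
by rewrite !muln0 !expr0 mul1r mulr1 polyC_exp.
Qed.
Lemma candB (R : comPzRingType) (n:nat) (X j h b bi b1n b2 p q : R) : (0 < n)%N ->
  j^+2 = -1 -> 2 * h = 1 -> b*bi = 1 -> b = b2^+2 -> p = X + j -> q = 1 + j*X ->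
  (p + b*q) * (p^+n * (h*b1n*b2 * \sum_(m<n) X^+(n.-1-m) * ((1 - b*j)*h*(X - j))^+m)
     - (-q)^+n * (-(j*h)*b1n*b2^+(2*n-1) * \sum_(m<n) X^+(n.-1-m) * ((1 + j*bi)*h * p)^+m))
  = (p + b*q) * \sum_(k<n) p^+(n.-1-k) * (-q)^+k * (b1n * b2^+(2*k+1) * X^+n).
Proof.
move=> n0 hj hh hbi hb hp hq.
have c1 : j^+2 + 1 = 0 by rewrite hj addNr.
have c2 : 2 * h - 1 = 0 by rewrite hh subrr.
have c3 : b * bi - 1 = 0 by rewrite hbi subrr.
set u := (1 - b*j)*h*(X - j); set v := (1 + j*bi)*h * p.
set Y0 := \sum_(m<n) X^+(n.-1-m) * u^+m; set Yn := \sum_(m<n) X^+(n.-1-m) * v^+m.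
have e1 : p + b*q = 2*(X - u).
  apply: (@eqc3 _ _ _ b ((1-b*j)*(X-j)) 0 _ _ _ c1 c2 c1); rewrite /u hp hq; ring.
have e2 : (p + b*q) * (-(j*h)) = b * (X - v).
  apply: (@eqc3 _ _ _ (-(b*X*h)) (b*X) (j*h*(X+j)) _ _ _ c1 c2 c3); rewrite /v hp hq; ring.
have e3 : p * u - b * (-q) * v = 0.
  apply: (@eqc3 _ _ _ (h * p *(X+b)) 0 (h * p *(1+j*X)*j) _ _ _ c1 c2 c3); rewrite /u /v hq; ring.
have F1 : (p + b*q) * Y0 = 2*(X^+n - u^+n) by rewrite e1 -mulrA geoS.
have F2 : (p + b*q) * (-(j*h)) * Yn = b*(X^+n - v^+n) by rewrite e2 -mulrA geoS.
have F3 : (p + b*q) * \sum_(k<n) p^+(n.-1-k) * (- (b*q))^+k = p^+n - (-(b*q))^+n.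
  by rewrite -{1}[b*q]opprK geoS.
have F4 : p^+n * u^+n - b^+n * (-q)^+n * v^+n = 0.
  have e3' : p*u = b*(-q)*v by apply/eqP; rewrite -subr_eq0 e3.
  by rewrite -exprMn e3' !exprMn subrr.
have F5 := @b2pow _ _ _ _ n0 hb.
have F6 : (-(b*q))^+n = b^+n * (-q)^+n by rewrite -exprMn mulrN.
have -> : \sum_(k<n) p^+(n.-1-k) * (-q)^+k * (b1n * b2^+(2*k+1) * X^+n)
   = b1n * X^+n * \sum_(k<n) p^+(n.-1-k) * (-q)^+k * b2^+(2*k+1).
  by rewrite mulr_sumr; apply eq_bigr => k _; ring.
rewrite (@sumB _ _ _ b) //.
have -> : (p + b * q) * (b1n * X^+n * (b2 * \sum_(k < n) p ^+ (n.-1 - k) * (- (b * q)) ^+ k)) =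
   b1n * X^+n * b2 * ((p + b * q) * \sum_(k < n) p ^+ (n.-1 - k) * (- (b * q)) ^+ k) by ring.
rewrite F3 F6.
have -> : (p + b * q) * (p ^+ n * (h * b1n * b2 * Y0) - (- q) ^+ n * (- (j * h) * b1n * b2 ^+ (2 * n - 1) * Yn))
  = h * b1n * b2 * p^+n * ((p + b*q) * Y0) - (-q)^+n * b1n * b2^+(2*n-1) * ((p + b*q) * (-(j*h)) * Yn) by ring.
rewrite F1 F2.
have -> : (-q)^+n * b1n * b2^+(2*n-1) * (b*(X^+n - v^+n)) = (b2^+(2*n-1)*b) * b1n * (-q)^+n * (X^+n - v^+n) by ring.
have -> : h * b1n * b2 * p^+n * (2*(X^+n - u^+n)) = (2*h) * b1n * b2 * p^+n * (X^+n - u^+n) by ring.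
rewrite hh F5.
apply: (@eqc1 _ _ _ (-(b1n*b2)) _ F4); ring.
Qed.
Lemma solve1 (C : numClosedFieldType) n (b1 b2 : C) : (0 < n)%N -> b2 != 0 ->
  ypoly (Kinv C n *m vcol n 1 b1 b2) 0 =
    (2^-1)%:P * (b1^+(2*n))%:P * b2%:P *
      \sum_(m<n) ('X) ^+ (n.-1-m) * ((1 - (b2^+2)%:P * 'i%:P) * (2^-1)%:P * ('X - 'i%:P))^+m
  /\ ypoly (Kinv C n *m vcol n 1 b1 b2) n =
    -('i%:P * (2^-1)%:P) * (b1^+(2*n))%:P * b2%:P^+(2*n-1) *
      \sum_(m<n) ('X) ^+ (n.-1-m) * ((1 + 'i%:P * ((b2^+2)^-1)%:P) * (2^-1)%:P * ('X + 'i%:P))^+m.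
Proof.
move=> n0 hb2.
have hbi : (b2^+2)%:P * ((b2^+2)^-1)%:P = 1 :> {poly C} by rewrite -polyCM mulfV // expf_neq0.
have hb : (b2^+2)%:P = (b2%:P)^+2 :> {poly C} by rewrite rmorphXn.
have hB := @candB _ n 'X 'i%:P (2^-1)%:P (b2^+2)%:P ((b2^+2)^-1)%:P (b1^+(2*n))%:P b2%:P
   ('X + 'i%:P) (1 + 'i%:P * 'X) n0 (iP2 C) (h2P C) hbi hb erefl erefl.
have hS := @Ysys C n 1 b1 b2 isT.
apply: (@finish C n _ _ _ _ (b2^+2)).
- exact: size_poly.
- rewrite (_ : (2^-1)%:P * (b1^+(2*n))%:P * b2%:P = (2^-1 * b1^+(2*n) * b2)%:P :> {poly C});
    last by rewrite !polyCM.
  apply: leq_trans (@size_Cm C _ _) _; apply: size_geo2; first by rewrite size_polyX.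
  rewrite (_ : (1 - (b2^+2)%:P * 'i%:P) * (2^-1)%:P * ('X - 'i%:P)
     = (- ((1 - b2^+2 * 'i) * 2^-1 * 'i))%:P + ((1 - b2^+2 * 'i) * 2^-1)%:P * 'X); last by ring.
  exact: size_lin.
rewrite hB hS; congr (_ * _); apply: eq_bigr => c _.
by rewrite !muln1 polyCM !polyC_exp.
Qed.
Lemma ev_geo1 (C : numClosedFieldType) (a c : C) n x :
  (\sum_(m<n) (a%:P + c%:P * 'X)^+m).[x] = \sum_(m<n) (a + c*x)^+m.
Proof. by rewrite horner_sum; apply: eq_bigr => m _; rewrite horner_exp !hornerE. Qed.

Lemma ev_geo2 (C : numClosedFieldType) (a c : C) n x :
  (\sum_(m<n) ('X) ^+ (n.-1-m) * (a%:P + c%:P * 'X)^+m).[x] = \sum_(m<n) x^+(n.-1-m) * (a + c*x)^+m.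
Proof. by rewrite horner_sum; apply: eq_bigr => m _; rewrite hornerM !horner_exp !hornerE. Qed.

Lemma rev_geo (C : numClosedFieldType) (w B : C) n :
  w^+(n.-1) * \sum_(m<n) B^+m = \sum_(m<n) w^+(n.-1-m) * (w*B)^+m.
Proof.
rewrite mulr_sumr; apply: eq_bigr => m _.
rewrite exprMn mulrA -exprD; congr (_ ^+ _ * _); have := ltn_ord m; lia.
Qed.

Theorem lemma3p4 (C : numClosedFieldType) (n : nat) (hn : (0 < n)%N)
    (k l : nat) (hk : (k <= 1)%N) (hl : (l <= 1)%N)
    (w1 w2 b1 b2 : C) (hw1 : w1 != 0) (hb2 : b2 != 0) :
  Hgen n k l w1 w2 b1 b2 = Fgen n k l w1 w2 b1 b2.
Proof.
have hi2 := sqrCi C.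
have hw : w1^+2 != 0 by rewrite expf_neq0.
have hb : b2^+2 != 0 by rewrite expf_neq0.
have h20 := two_neq0 C.
rewrite Hgen_eval //.
case: k hk => [|[|//]] _; case: l hl => [|[|//]] _.
- have [e0 _] := @solve0 C n b1 b2 hn hb2.
  rewrite !muln0 expr0 mulr1 e0.
  rewrite (_ : -('i%:P * (2^-1)%:P) * b2%:P = (-('i * 2^-1) * b2)%:P :> {poly C}); last by ring.
  rewrite (_ : (1 + (b2^+2)%:P * 'i%:P) * (2^-1)%:P * (1 + 'i%:P * 'X)
     = ((1 + b2^+2 * 'i) * 2^-1)%:P + ((1 + b2^+2 * 'i) * 2^-1 * 'i)%:P * 'X); last by ring.
  rewrite hornerM hornerC ev_geo1 /Fgen /Fn /fn.
  rewrite (eq_bigr (fun m : 'I_n => ((1 + b2^+2*'i) * (1 + w1^+2*'i) / 2)^+m)); last first.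
    by move=> m _; congr (_ ^+ _); ring.
  ring.
- have [e0 _] := @solve1 C n b1 b2 hn hb2.
  rewrite !muln0 expr0 mulr1 e0.
  rewrite (_ : (2^-1)%:P * (b1^+(2*n))%:P * b2%:P = (2^-1 * b1^+(2*n) * b2)%:P :> {poly C});
    last by rewrite !polyCM.
  rewrite (_ : (1 - (b2^+2)%:P * 'i%:P) * (2^-1)%:P * ('X - 'i%:P)
     = (- ((1 - b2^+2 * 'i) * 2^-1 * 'i))%:P + ((1 - b2^+2 * 'i) * 2^-1)%:P * 'X); last by ring.
  rewrite hornerM hornerC ev_geo2 /Fgen /Fn /fn.
  rewrite (eq_bigr (fun m : 'I_n => (w1^+2)^+(n.-1-m) *
     ((w1^+2) * ((1 + (-(b2^+2)) * 'i) * (1 + (- (w1^+2)^-1) * 'i) / 2))^+m)); last first.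
    by move=> m _; congr (_ * _ ^+ _); field.
  rewrite -rev_geo.
  have -> : w1^+(2*n-1) = w1 * (w1^+2)^+(n.-1).
    by rewrite -exprM -exprS; congr (_ ^+ _); lia.
  ring: hi2.
- have [_ e1] := @solve0 C n b1 b2 hn hb2.
  rewrite !muln1 e1.
  rewrite (_ : (2^-1)%:P * b2%:P^+(2*n-1) = (2^-1 * b2^+(2*n-1))%:P :> {poly C});
    last by rewrite polyCM polyC_exp.
  rewrite (_ : -((1 + (b2^+2)%:P * 'i%:P) * (2^-1)%:P * ((b2^+2)^-1)%:P) * ('X + 'i%:P)
     = (-((1 + b2^+2 * 'i) * 2^-1 * (b2^+2)^-1) * 'i)%:P
       + (-((1 + b2^+2 * 'i) * 2^-1 * (b2^+2)^-1))%:P * 'X); last by ring.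
  rewrite hornerM hornerC ev_geo1 /Fgen /Fn /fn.
  have c1 : 'i^+2 + 1 = 0 :> C by rewrite hi2 addNr.
  have c3 : b2^+2 * (b2^+2)^-1 - 1 = 0 :> C by rewrite mulfV // subrr.
  rewrite (eq_bigr (fun m : 'I_n =>
     ((1 + (- (b2^+2)^-1) * 'i) * (1 + (- w1^+2) * 'i) / 2)^+m)); last first.
    move=> m _; congr (_ ^+ _).
    apply: (@eqc3 _ _ _ (-(2^-1*(w1^+2*(b2^+2)^-1+1))) 0 (-(2^-1*(w1^+2*'i + 'i^+2))) _ _ _ c1 c1 c3).
    ring.
  ring: hi2.
- have [_ e1] := @solve1 C n b1 b2 hn hb2.
  rewrite !muln1 e1.
  rewrite (_ : -('i%:P * (2^-1)%:P) * (b1^+(2*n))%:P * b2%:P^+(2*n-1)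
       = (-('i * 2^-1) * b1^+(2*n) * b2^+(2*n-1))%:P :> {poly C});
    last by rewrite -polyC_exp !polyCM polyCN; ring.
  rewrite (_ : (1 + 'i%:P * ((b2^+2)^-1)%:P) * (2^-1)%:P * ('X + 'i%:P)
     = ((1 + 'i * (b2^+2)^-1) * 2^-1 * 'i)%:P + ((1 + 'i * (b2^+2)^-1) * 2^-1)%:P * 'X);
    last by ring.
  rewrite hornerM hornerC ev_geo2 /Fgen /Fn /fn.
  rewrite (eq_bigr (fun m : 'I_n => (w1^+2)^+(n.-1-m) *
     ((w1^+2) * ((1 + (b2^+2)^-1 * 'i) * (1 + (w1^+2)^-1 * 'i) / 2))^+m)); last first.
    by move=> m _; congr (_ * _ ^+ _); field; rewrite hw1 hb2.
  rewrite -rev_geo.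
  have -> : w1^+(2*n-1) = w1 * (w1^+2)^+(n.-1).
    by rewrite -exprM -exprS; congr (_ ^+ _); lia.
  ring.
Qed.
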